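(* Let $(X,\mathcal T,P,\leq,\{\sigma_x:x\in X\})$ be a typed topological space and $p\in P$. If $A\subseteq X$ is type-$p$-connected, then (1) $p\vdash CL_n(A)$ is type-$p$-connected for every integer $n>0$, and (2) $p\vdash tr(A)$ is type-$p$-connected.
   Context: A typed topological space $(X,\mathcal T,P,\leq,\{\sigma_x:x\in X\})$ consists of a topological space $(X,\mathcal T)$, a partially ordered set $(P,\leq)$ of types, and for each $x\in X$ a partial function $\sigma_x:\{O\in\mathcal T:x\in O\}\to P$ such that for all $U,V$ in its domain, $\sigma_x(U)\leq\sigma_x(V)$ iff $U\subseteq V$. $U$ is a type-$p$ neighborhood of $x$, written $p\vdash U(x)$, if $U$ is in the domain of $\sigma_x$ and $\sigma_x(U)=p$. $x$ is a $p$-accumulation point of $A$ if every type-$p$ neighborhood of $x$ meets $A$. $p\vdash CL_1(A)=A\cup\{p\text{-accumulation points of }A\}$, $p\vdash CL_n(A)=p\vdash CL_1(p\vdash CL_{n-1}(A))$, $p\vdash tr(A)=\bigcup_{n\ge1}p\vdash CL_n(A)$. A set $A\subseteq X$ is type-$p$-connected if there do not exist two families of type-$p$ neighborhoods $\{p\vdash U(x_i):i\in I\}$ and $\{p\vdash U(x_j):j\in J\}$ (each $U(x_k)$ a type-$p$ neighborhood of the point $x_k$) such that $I\neq\emptyset$, $J\neq\emptyset$, $A=\{x_i:i\in I\}\cup\{x_j:j\in J\}$, and $\left(\bigcup_{i\in I}U(x_i)\right)\cap\left(\bigcup_{j\in J}U(x_j)\right)=\emptyset$. *)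

(* Defs.v *)
From HB Require Import structures.
From mathcomp Require Import all_boot all_order.
From mathcomp Require Import boolp classical_sets topology.
Set Implicit Arguments. Unset Strict Implicit. Unset Printing Implicit Defensive.
Import Order.TTheory.
Local Open Scope classical_set_scope.

(* A typing of a topological space T by a poset P: sigma x is a partial
   function (option-valued) on the open neighbourhoods of x. *)
Definition typed_top (T : topologicalType) (d : Order.disp_t) (P : porderType d)
  (sigma : T -> set T -> option P) : Prop :=
  (forall x U p, sigma x U = Some p -> open U /\ U x) /\
  (forall x U V p q, sigma x U = Some p -> sigma x V = Some q ->
     ((p <= q)%O <-> U `<=` V)).

Section Typed.
Variables (T : topologicalType) (d : Order.disp_t) (P : porderType d)
  (sigma : T -> set T -> option P).

Definition type_nbhd (p : P) (x : T) (U : set T) : Prop := sigma x U = Some p.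

Definition p_acc (p : P) (A : set T) (x : T) : Prop :=
  forall U, type_nbhd p x U -> U `&` A !=set0.

Definition CL1 (p : P) (A : set T) : set T := A `|` [set x | p_acc p A x].

(* CLn p n A = p |- CL_n(A) for n >= 1 (CLn p 0 A = A). *)
Definition CLn (p : P) (n : nat) (A : set T) : set T := iter n (CL1 p) A.

Definition tr (p : P) (A : set T) : set T :=
  \bigcup_(n in [set n : nat | (0 < n)%N]) CLn p n A.

Definition type_connected (p : P) (A : set T) : Prop :=
  ~ exists (I J : Type) (xi : I -> T) (Ui : I -> set T)
           (xj : J -> T) (Uj : J -> set T),
      inhabited I /\ inhabited J /\
      (forall i, type_nbhd p (xi i) (Ui i)) /\
      (forall j, type_nbhd p (xj j) (Uj j)) /\
      A = range xi `|` range xj /\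
      (\bigcup_i Ui i) `&` (\bigcup_j Uj j) = set0.
End Typed.

(* Main.v *)
Require Import Defs.
From HB Require Import structures.
From mathcomp Require Import all_boot all_order.
From mathcomp Require Import boolp classical_sets topology.
Local Open Scope classical_set_scope.

Section Aux.
Variables (T : topologicalType) (d : Order.disp_t) (P : porderType d)
  (sigma : T -> set T -> option P) (p : P).

Lemma restrict (B C : set T) : type_connected sigma p B -> B `<=` C ->
  forall (I J : Type) (xi : I -> T) (Ui : I -> set T) (xj : J -> T) (Uj : J -> set T),
  (forall i, type_nbhd sigma p (xi i) (Ui i)) ->
  (forall j, type_nbhd sigma p (xj j) (Uj j)) ->
  C = range xi `|` range xj ->
  (\bigcup_i Ui i) `&` (\bigcup_j Uj j) = set0 ->
  (exists i, B (xi i)) -> (exists j, B (xj j)) -> False.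
Proof.
move=> hB BC I J xi Ui xj Uj hi hj hC hD [i0 Bi0] [j0 Bj0]; apply: hB.
exists {i : I | B (xi i)}, {j : J | B (xj j)},
  (fun i => xi (proj1_sig i)), (fun i => Ui (proj1_sig i)),
  (fun j => xj (proj1_sig j)), (fun j => Uj (proj1_sig j)).
split; first exact: (inhabits (exist (fun i => B (xi i)) i0 Bi0)).
split; first exact: (inhabits (exist (fun j => B (xj j)) j0 Bj0)).
split; first by move=> [i ?]; apply: hi.
split; first by move=> [j ?]; apply: hj.
split.
  apply/seteqP; split=> x.
    move=> Bx; have : C x by apply: BC.
    rewrite hC; case=> [[i _ hx]|[j _ hx]]; subst x.
      by left; exists (exist _ i Bx).
    by right; exists (exist _ j Bx).
  by case=> [[[i Bi] _ <-]|[[j Bj] _ <-]].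
apply/seteqP; split=> [x [[i _ Uix] [j _ Ujx]]|x //].
rewrite -hD; split; [by exists (proj1_sig i) | by exists (proj1_sig j)].
Qed.

Lemma side (A : set T) (K L : Type) (xk : K -> T) (Uk : K -> set T)
  (xl : L -> T) (Ul : L -> set T) : typed_top sigma ->
  (forall k, type_nbhd sigma p (xk k) (Uk k)) ->
  (forall l, type_nbhd sigma p (xl l) (Ul l)) ->
  CL1 sigma p A = range xk `|` range xl ->
  (\bigcup_k Uk k) `&` (\bigcup_l Ul l) = set0 ->
  forall k : K, exists k' : K, A (xk k').
Proof.
move=> [hT _] hk hl hC hD k.
have : CL1 sigma p A (xk k) by rewrite hC; left; exists k.
case=> [Ak|acc]; first by exists k.
have [a [Uka Aa]] := acc _ (hk k).
have : CL1 sigma p A a by left.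
rewrite hC; case=> [[k' _ e]|[l _ e]]; first by exists k'; rewrite e.
exfalso.
have Ula : Ul l a by rewrite -e; apply: (proj2 (hT _ _ _ (hl l))).
have : (set0 : set T) a by rewrite -hD; split; [exists k | exists l].
done.
Qed.

Lemma CL1_conn (A : set T) : typed_top sigma -> type_connected sigma p A ->
  type_connected sigma p (CL1 sigma p A).
Proof.
move=> hT hA [I [J [xi [Ui [xj [Uj [[i0] [[j0] [hi [hj [hC hD]]]]]]]]]]].
have [i1 Ai1] := @side A _ _ _ _ _ _ hT hi hj hC hD i0.
have hC' : CL1 sigma p A = range xj `|` range xi by rewrite hC setUC.
have hD' : (\bigcup_j Uj j) `&` (\bigcup_i Ui i) = set0 by rewrite setIC.
have [j1 Aj1] := @side A _ _ _ _ _ _ hT hj hi hC' hD' j0.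
have := @restrict _ _ hA _ _ _ _ _ _ _ hi hj hC hD. apply; [by move=> x; left | by exists i1 | by exists j1].
Qed.

Lemma CLn_mono (A : set T) n m : (n <= m)%N ->
  CLn sigma p n A `<=` CLn sigma p m A.
Proof.
move=> /subnK <-; elim: (m - n) => [|k IH] //=.
move=> x /IH hx; by left.
Qed.

End Aux.

Theorem lemma2p13 (T : topologicalType) (d : Order.disp_t) (P : porderType d)
  (sigma : T -> set T -> option P) (p : P) (A : set T) :
  typed_top sigma -> type_connected sigma p A ->
  (forall n : nat, (0 < n)%N -> type_connected sigma p (CLn sigma p n A)) /\
  type_connected sigma p (tr sigma p A).
Proof.
move=> hT hA.
have H : forall n, type_connected sigma p (CLn sigma p n A).
  by elim=> [|n IH] //; apply: CL1_conn.
split; first by move=> n _; apply: H.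
move=> [I [J [xi [Ui [xj [Uj [[i0] [[j0] [hi [hj [hC hD]]]]]]]]]]].
have mi : forall i, exists2 n, (0 < n)%N & CLn sigma p n A (xi i).
  move=> i; have : tr sigma p A (xi i) by rewrite hC; left; exists i.
  by case=> n n0 h; exists n.
have mj : forall j, exists2 n, (0 < n)%N & CLn sigma p n A (xj j).
  move=> j; have : tr sigma p A (xj j) by rewrite hC; right; exists j.
  by case=> n n0 h; exists n.
have [n n0 hn] := mi i0; have [m m0 hm] := mj j0.
have := @restrict _ _ _ _ _ _ _ (H (maxn n m)) _ _ _ _ _ _ _ hi hj hC hD; apply.
- move=> x hx; exists (maxn n m) => //=.
  exact: leq_trans n0 (leq_maxl n m).
- by exists i0; apply: CLn_mono (leq_maxl n m) _ hn.
- by exists j0; apply: CLn_mono (leq_maxr n m) _ hm.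
Qed.
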